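(* Let $T$ be a triangle and $n$ a positive integer. Then there exists $\varepsilon_0>0$ such that for every $0<\varepsilon<\varepsilon_0$ there exists a point set $P\subseteq\mathbb{R}^2$ with $|P|\le 20$ such that $\mathcal{H}(T,P,\varepsilon)$ has complete shadow graph and $$h(n,T)\le n^3\,\lambda(\mathcal{H}(T,P,\varepsilon)).$$
   Context: For a triangle $T$ with side lengths $a,b,c$ and $\varepsilon>0$, with $\varepsilon'=\varepsilon\min\{a,b,c\}$, a triangle $A'B'C'$ is $\varepsilon$-congruent to $T$ if there are $A,B,C\in\mathbb{R}^2$ with $ABC$ congruent to $T$ and $A',B',C'$ within distance $\varepsilon'$ of $A,B,C$ respectively. $h(n,T,\varepsilon)$ is the maximum over $n$-point sets $P\subseteq\mathbb{R}^2$ of the number of 3-subsets of $P$ forming triangles $\varepsilon$-congruent to $T$, and $h(n,T)=\min_{\varepsilon>0}h(n,T,\varepsilon)$. For finite $P$, $\mathcal{H}(T,P,\varepsilon)$ is the 3-uniform hypergraph on $P$ whose edges are the triples forming triangles $\varepsilon$-congruent to $T$. The shadow graph of a 3-graph $H$ is the graph on $V(H)$ whose edges are the pairs contained in some edge of $H$; it is complete if all pairs are edges. For a 3-graph $H$ on vertices $1,\dots,m$, its Lagrangian is $\lambda(H)=\max\{\sum_{ijk\in E(H)}x_ix_jx_k : x\in[0,1]^m,\ x_1+\dots+x_m=1\}$. *)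

(* Defs.v *)
From HB Require Import structures.
From mathcomp Require Import all_boot all_order all_algebra.
From mathcomp Require Import boolp classical_sets reals.
Set Implicit Arguments. Unset Strict Implicit. Unset Printing Implicit Defensive.
Import Order.TTheory GRing.Theory Num.Theory.
Local Open Scope ring_scope.
Local Open Scope classical_set_scope.

Section Defs.
Variable R : realType.

Definition pt := (R * R)%type.

Definition dist (p q : pt) : R :=
  Num.sqrt ((p.1 - q.1) ^+ 2 + (p.2 - q.2) ^+ 2).

Definition is_triangle (a b c : R) : Prop :=
  [/\ 0 < a, 0 < b, 0 < c & [/\ a < b + c, b < a + c & c < a + b]].

Definition congruent (a b c : R) (A B C : pt) : Prop :=
  perm_eq [:: dist B C; dist C A; dist A B] [:: a; b; c].

Definition eps_congruent (a b c eps : R) (A' B' C' : pt) : Prop :=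
  let eps' := eps * Num.min a (Num.min b c) in
  exists A B C : pt, congruent a b c A B C /\
    dist A' A <= eps' /\ dist B' B <= eps' /\ dist C' C <= eps'.

(* The hypergraph H(T,P,eps) on a point set P given by an injective
   indexing P : 'I_m -> pt; {i,j,k} is an edge iff i,j,k are distinct and
   P i, P j, P k form a triangle eps-congruent to T. *)
Definition Hedge (a b c eps : R) (m : nat) (P : 'I_m -> pt) (i j k : 'I_m) : Prop :=
  [/\ i != j, j != k, i != k & eps_congruent a b c eps (P i) (P j) (P k)].

Definition count_cong (a b c eps : R) (m : nat) (P : 'I_m -> pt) : nat :=
  #|[set t : 'I_m * 'I_m * 'I_m |
       ((t.1.1 < t.1.2)%N && (t.1.2 < t.2)%N) &&
       `[< Hedge a b c eps P t.1.1 t.1.2 t.2 >] ]|.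

(* h(n,T,eps): maximum over n-point sets P of count_cong (as a sup of a
   bounded nonempty set of naturals, hence a maximum). *)
Definition h_eps (n : nat) (a b c eps : R) : R :=
  sup [set (count_cong a b c eps P)%:R | P in [set P : 'I_n -> pt | injective P]].

(* h(n,T) = min over eps > 0 of h(n,T,eps) (an inf of a set of naturals). *)
Definition h_T (n : nat) (a b c : R) : R :=
  inf [set h_eps n a b c eps | eps in [set e : R | 0 < e]].

Definition shadow_complete (a b c eps : R) (m : nat) (P : 'I_m -> pt) : Prop :=
  forall i j : 'I_m, i != j -> exists k : 'I_m, Hedge a b c eps P i j k.

Definition lagrangian (a b c eps : R) (m : nat) (P : 'I_m -> pt) : R :=
  sup [set (\sum_(t : 'I_m * 'I_m * 'I_m |
              ((t.1.1 < t.1.2)%N && (t.1.2 < t.2)%N) &&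
              `[< Hedge a b c eps P t.1.1 t.1.2 t.2 >])
              x t.1.1 * x t.1.2 * x t.2)
       | x in [set x : 'I_m -> R | (forall i, 0 <= x i <= 1) /\
                                    \sum_(i < m) x i = 1]].

End Defs.

(* Main.v *)
Require Import Defs.
From HB Require Import structures.
From mathcomp Require Import all_boot all_order all_algebra.
From mathcomp Require Import boolp classical_sets reals.
From mathcomp Require Import ring lra.
Set Implicit Arguments. Unset Strict Implicit. Unset Printing Implicit Defensive.
Import Order.TTheory GRing.Theory Num.Theory.
Local Open Scope ring_scope.

Section Geo.
Variable R : realType.
Implicit Types p q r : pt R.

Lemma dist_sym p q : dist p q = dist q p.
Proof. rewrite /dist; congr Num.sqrt; ring. Qed.

Lemma dist_ge0 p q : 0 <= dist p q.
Proof. exact: sqrtr_ge0. Qed.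

Lemma dist2 p q : dist p q ^+ 2 = (p.1 - q.1) ^+ 2 + (p.2 - q.2) ^+ 2.
Proof. rewrite /dist sqr_sqrtr //; apply: addr_ge0; apply: sqr_ge0. Qed.

Lemma dist_tri p q r : dist p r <= dist p q + dist q r.
Proof.
set u1 := p.1 - q.1; set u2 := p.2 - q.2; set v1 := q.1 - r.1; set v2 := q.2 - r.2.
have e1 : p.1 - r.1 = u1 + v1 by rewrite /u1 /v1; ring.
have e2 : p.2 - r.2 = u2 + v2 by rewrite /u2 /v2; ring.
have hu := dist2 p q; have hv := dist2 q r; have hw := dist2 p r.
rewrite -/u1 -/u2 in hu; rewrite -/v1 -/v2 in hv; rewrite e1 e2 in hw.
have g1 := dist_ge0 p q; have g2 := dist_ge0 q r; have g3 := dist_ge0 p r.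
set A := dist p q in hu g1 *; set B := dist q r in hv g2 *; set C := dist p r in hw g3 *.
have cs : u1 * v1 + u2 * v2 <= A * B.
  have h : (u1 * v1 + u2 * v2) ^+ 2 <= (A * B) ^+ 2.
    rewrite exprMn hu hv.
    have : 0 <= (u1 * v2 - u2 * v1) ^+ 2 by apply: sqr_ge0.
    move=> h0; rewrite -subr_ge0.
    have -> : (u1 ^+ 2 + u2 ^+ 2) * (v1 ^+ 2 + v2 ^+ 2) - (u1 * v1 + u2 * v2) ^+ 2
       = (u1 * v2 - u2 * v1) ^+ 2 by ring.
    exact: h0.
  have hAB : 0 <= A * B by apply: mulr_ge0.
  case: (lerP (u1 * v1 + u2 * v2) 0) => hs; first by apply: le_trans hs hAB.
  by rewrite -(ler_pXn2r (n:=2)) // ?nnegrE // ltW.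
have : C ^+ 2 <= (A + B) ^+ 2.
  rewrite hw; have -> : (A + B) ^+ 2 = A ^+ 2 + B ^+ 2 + 2 * (A * B) by ring.
  rewrite hu hv. lra.
move=> h; rewrite -(ler_pXn2r (n:=2)) ?nnegrE //; exact: addr_ge0.
Qed.


Lemma dist_diff p q p' q' :
  `|dist p q - dist p' q'| <= dist p p' + dist q q'.
Proof.
have h1 := dist_tri p p' q; have h2 := dist_tri p' q' q.
have h3 := dist_tri p' p q'; have h4 := dist_tri p q q'.
rewrite (dist_sym q' q) in h2; rewrite (dist_sym p' p) in h3.
rewrite ler_norml; apply/andP; split; lra.
Qed.

Variables (a b c eps : R).

Lemma cong_swap12 A B C : congruent a b c A B C -> congruent a b c B A C.
Proof.
rewrite /congruent => H; apply: perm_trans H.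
rewrite (dist_sym A C) (dist_sym C B) (dist_sym B A).
by rewrite (perm_catCA [:: dist C A] [:: dist B C] [:: dist A B]) perm_refl.
Qed.

Lemma cong_swap23 A B C : congruent a b c A B C -> congruent a b c A C B.
Proof.
rewrite /congruent => H; apply: perm_trans H.
rewrite (dist_sym C B) (dist_sym B A) (dist_sym A C) perm_cons.
by rewrite (perm_catC [:: dist A B] [:: dist C A]) perm_refl.
Qed.

Lemma econg_swap12 A B C : eps_congruent a b c eps A B C -> eps_congruent a b c eps B A C.
Proof.
case=> [X [Y [Z [h [h1 [h2 h3]]]]]]; exists Y, X, Z; split; first exact: cong_swap12.
by [].
Qed.

Lemma econg_swap23 A B C : eps_congruent a b c eps A B C -> eps_congruent a b c eps A C B.
Proof.
case=> [X [Y [Z [h [h1 [h2 h3]]]]]]; exists X, Z, Y; split; first exact: cong_swap23.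
by [].
Qed.

Definition mu := Num.min a (Num.min b c).

Lemma econg_dist A B C : eps_congruent a b c eps A B C ->
  exists2 s, s \in [:: a; b; c] & `|dist A B - s| <= 2 * (eps * mu).
Proof.
case=> [X [Y [Z [h [h1 [h2 h3]]]]]]; exists (dist X Y).
  by rewrite -(perm_mem h) !inE eqxx !orbT.
apply: le_trans (dist_diff A B X Y) _; rewrite /mu; lra.
Qed.

Section Hyp.
Variables (m : nat) (P : 'I_m -> pt R).

Lemma Hedge_swap12 i j k : Hedge a b c eps P i j k -> Hedge a b c eps P j i k.
Proof.
case=> h1 h2 h3 h; split => //; rewrite 1?eq_sym //; exact: econg_swap12.
Qed.

Lemma Hedge_swap23 i j k : Hedge a b c eps P i j k -> Hedge a b c eps P i k j.
Proof.
case=> h1 h2 h3 h; split => //; rewrite 1?eq_sym //; exact: econg_swap23.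
Qed.

Lemma Hedge_dist i j k : Hedge a b c eps P i j k ->
  exists2 s, s \in [:: a; b; c] & `|dist (P i) (P j) - s| <= 2 * (eps * mu).
Proof. by case=> _ _ _ /econg_dist. Qed.

End Hyp.
End Geo.

Section Lag.
Variable R : realType.
Variables (a b c eps : R) (n : nat) (Q : 'I_n -> pt R).

Notation E := (Hedge a b c eps Q).
Definition pr (t : 'I_n * 'I_n * 'I_n) : bool :=
  ((t.1.1 < t.1.2)%N && (t.1.2 < t.2)%N) && `[< E t.1.1 t.1.2 t.2 >].
Definition L (x : 'I_n -> R) : R :=
  \sum_(t | pr t) x t.1.1 * x t.1.2 * x t.2.

Section Shift.
Variables (x : 'I_n -> R) (u v : 'I_n).
Hypothesis uv : u != v.
Hypothesis Hx : forall k, E u v k -> x k = 0.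
Definition dd (i : 'I_n) : R := (i == u)%:R - (i == v)%:R.

Lemma dd_nz i : dd i != 0 -> (i == u) || (i == v).
Proof. by rewrite /dd; case: (i == u); case: (i == v); rewrite ?subrr ?eqxx. Qed.

Lemma key i j k : E i j k -> dd i * dd j * x k = 0.
Proof.
move=> h; have [hi|/dd_nz hi] := eqVneq (dd i) 0; first by rewrite hi !mul0r.
have [hj|/dd_nz hj] := eqVneq (dd j) 0; first by rewrite hj mulr0 mul0r.
case: h => ij jk ik h.
case/orP: hi => /eqP ei; case/orP: hj => /eqP ej; subst.
- by rewrite eqxx in ij.
- by rewrite Hx ?mulr0.
- by rewrite Hx ?mulr0 //; apply: Hedge_swap12.
- by rewrite eqxx in ij.
Qed.

Lemma key3 i j k : i != j -> j != k -> i != k -> dd i * dd j * dd k = 0.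
Proof.
move=> ij jk ik.
have [hi|/dd_nz hi] := eqVneq (dd i) 0; first by rewrite hi !mul0r.
have [hj|/dd_nz hj] := eqVneq (dd j) 0; first by rewrite hj mulr0 mul0r.
have [hk|/dd_nz hk] := eqVneq (dd k) 0; first by rewrite hk mulr0.
by case/orP: hi => /eqP ei; case/orP: hj => /eqP ej; case/orP: hk => /eqP ek;
  subst; rewrite ?eqxx in ij jk ik.
Qed.

Definition G := \sum_(t | pr t)
   (dd t.1.1 * x t.1.2 * x t.2 + x t.1.1 * dd t.1.2 * x t.2 + x t.1.1 * x t.1.2 * dd t.2).

Lemma L_shift s : L (fun i => x i + s * dd i) = L x + s * G.
Proof.
rewrite /L /G mulr_sumr -big_split /=; apply: eq_bigr => t /andP [_ /asboolP h].
have h1 := key h.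
have h2 := key (Hedge_swap23 h).
have h3 := key (Hedge_swap23 (Hedge_swap12 h)).
case: h => ij jk ik _.
have h4 := key3 ij jk ik.
set x1 := x t.1.1 in h2 h3 *; set x2 := x t.1.2 in h1 h3 *; set x3 := x t.2 in h1 h2 *.
set d1 := dd t.1.1 in h1 h2 h4 *; set d2 := dd t.1.2 in h1 h3 h4 *; set d3 := dd t.2 in h2 h3 h4 *.
have -> : (x1 + s * d1) * (x2 + s * d2) * (x3 + s * d3) =
  x1 * x2 * x3 + s * (d1 * x2 * x3 + x1 * d2 * x3 + x1 * x2 * d3)
  + s ^+ 2 * (d1 * d2 * x3 + d1 * d3 * x2 + d2 * d3 * x1) + s ^+ 3 * (d1 * d2 * d3) by ring.
by rewrite h1 h2 h3 h4 !addr0 !mulr0 !addr0.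
Qed.

Lemma sum_ind (w : 'I_n) : \sum_i ((i == w)%:R : R) = 1.
Proof.
rewrite (bigD1 w) //= eqxx big1 ?addr0 // => i /negPf -> //.
Qed.

Lemma sum_dd : \sum_i dd i = 0.
Proof. by rewrite /dd sumrB !sum_ind subrr. Qed.

End Shift.
Definition simplex (x : 'I_n -> R) := (forall i, 0 <= x i) /\ \sum_i x i = 1.
Definition supp (x : 'I_n -> R) : {set 'I_n} := [set i | x i != 0].
Definition closedS (S : {set 'I_n}) := forall u v, u \in S -> v \in S -> u != v ->
  exists k, k \in S /\ E u v k.

Lemma dd_u u v : u != v -> dd u v u = 1.
Proof. by move=> uv; rewrite /dd eqxx (negPf uv) subr0. Qed.
Lemma dd_v u v : u != v -> dd u v v = -1.
Proof. by move=> uv; rewrite /dd eqxx eq_sym (negPf uv) sub0r. Qed.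
Lemma dd_o u v i : i != u -> i != v -> dd u v i = 0.
Proof. by move=> iu iv; rewrite /dd (negPf iu) (negPf iv) subr0. Qed.

Lemma step x : simplex x -> ~ closedS (supp x) ->
  exists y, [/\ simplex y, L x <= L y & (#|supp y| < #|supp x|)%N].
Proof.
move=> [x0 x1] /existsNP [u /existsNP [v]].
move=> /not_implyP [hu /not_implyP [hv /not_implyP [uv hk]]].
have Hx : forall k, E u v k -> x k = 0.
  move=> k ek; have [//|xk] := eqVneq (x k) 0.
  by exfalso; apply: hk; exists k; split => //; rewrite inE.
move: hu hv; rewrite !inE => hu hv.
have sumy s : \sum_i (x i + s * dd u v i) = 1.
  by rewrite big_split /= -mulr_sumr sum_dd // mulr0 addr0.
have suppy s w : w \in [:: u; v] -> x w + s * dd u v w = 0 ->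
    (0 <= s * dd u v u + x u) -> (0 <= s * dd u v v + x v) ->
    [/\ simplex (fun i => x i + s * dd u v i) &
       (#|supp (fun i => (x i + s * dd u v i)%R)| < #|supp x|)%N].
  move=> hw hw0 pu pv; split.
    split; last exact: sumy.
    move=> i; have [->|iu] := eqVneq i u; first by rewrite addrC.
    have [->|iv] := eqVneq i v; first by rewrite addrC.
    by rewrite dd_o // mulr0 addr0.
  apply: proper_card; apply/properP; split.
    apply/fintype.subsetP => i; rewrite !inE; apply: contra_neq => xi0.
    have [ei|iu] := eqVneq i u; first by move: hu; rewrite -ei xi0 eqxx.
    have [ei|iv] := eqVneq i v; first by move: hv; rewrite -ei xi0 eqxx.
    by rewrite dd_o // mulr0 addr0.
  exists w; rewrite !inE ?hw0 ?eqxx //.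
  by move: hw; rewrite !inE => /orP [] /eqP ->.
have [gG|gG] := lerP 0 (G x u v).
  have [h1 h2] := suppy (x v) v ltac:(by rewrite !inE eqxx orbT) ltac:(by rewrite dd_v // mulrN1 subrr)
     ltac:(by rewrite dd_u // mulr1; apply: addr_ge0) ltac:(by rewrite dd_v // mulrN1 addNr).
  exists (fun i => x i + x v * dd u v i); split => //.
  rewrite L_shift //; rewrite lerDl; exact: mulr_ge0.
have [h1 h2] := suppy (- x u) u (mem_head _ _) ltac:(by rewrite dd_u // mulr1 subrr)
     ltac:(by rewrite dd_u // mulr1 addNr) ltac:(by rewrite dd_v // mulrNN mulr1; apply: addr_ge0).
exists (fun i => x i + - x u * dd u v i); split => //.
rewrite L_shift //; rewrite lerDl mulNr oppr_ge0; apply: mulr_ge0_le0 => //; exact: ltW.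
Qed.

Lemma reduce N : forall x, (#|supp x| <= N)%N -> simplex x ->
  exists y, [/\ simplex y, L x <= L y & closedS (supp y)].
Proof.
elim: N => [|N IH] x hN hx.
  exists x; split => //; move: hN; rewrite leqn0 => /eqP/cards0_eq -> u v.
  by rewrite inE.
case: (pselect (closedS (supp x))) => hc; first by exists x.
have [y [hy1 hy2 hy3]] := step hx hc.
have [z [hz1 hz2 hz3]] := IH y ltac:(by rewrite -ltnS; apply: leq_trans hN) hy1.
exists z; split => //; exact: le_trans hz2.
Qed.

End Lag.

Section Reidx.
Variable n : nat.

Definition ev (S : {set 'I_n}) (i : 'I_#|S|) : 'I_n := enum_val i.

Lemma ev_homo (S : {set 'I_n}) (i j : 'I_#|S|) : (i < j)%N -> (ev i < ev j)%N.
Proof.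
have so : sorted (fun u v : 'I_n => (u < v)%N) (enum S).
  rewrite /enum_mem; apply: sorted_filter; first by move=> ? ? ?; apply: ltn_trans.
  have := iota_ltn_sorted 0 n; rewrite -val_enum_ord sorted_map enumT; apply: sub_sorted => u v //.
move=> ij; rewrite /ev.
suff H : forall x0, (nth x0 (enum S) i < nth x0 (enum S) j)%N.
  by rewrite (enum_val_nth (enum_val i) j) {1}(enum_val_nth (enum_val i) i).
move=> x0; apply: (sorted_ltn_nth _ _ so) => //; first by move=> ? ? ?; apply: ltn_trans.
- by rewrite inE -cardE.
- by rewrite inE -cardE.
Qed.

Lemma ev_mono (S : {set 'I_n}) (i j : 'I_#|S|) : (ev i < ev j)%N = (i < j)%N.
Proof.
apply/idP/idP; last exact: ev_homo.
move=> h; case: (ltngtP i j) => // [/ev_homo|/val_inj e]; first by rewrite ltnNge => /negP; move: h => /ltnW ->.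
by move: h; rewrite e ltnn.
Qed.

Lemma ev_inj (S : {set 'I_n}) : injective (@ev S).
Proof. exact: enum_val_inj. Qed.

Lemma ev_in (S : {set 'I_n}) (i : 'I_#|S|) : ev i \in S.
Proof. exact: enum_valP. Qed.

End Reidx.

Section Lag2.
Variable R : realType.
Variables (a b c eps : R) (n : nat) (Q : 'I_n -> pt R) (y : 'I_n -> R).
Hypothesis hy : simplex y.

Let S := supp y.
Let P := fun i : 'I_#|S| => Q (ev i).
Let y' := fun i : 'I_#|S| => y (ev i).
Let ev3 (t : 'I_#|S| * 'I_#|S| * 'I_#|S|) : 'I_n * 'I_n * 'I_n :=
  (ev t.1.1, ev t.1.2, ev t.2).

Lemma ev3_inj : injective ev3.
Proof.
move=> [[i j] k] [[i' j'] k'] [] /ev_inj -> /ev_inj -> /ev_inj -> //.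
Qed.

Lemma pr_reidx t : pr a b c eps P t = pr a b c eps Q (ev3 t).
Proof.
rewrite /pr /= !ev_mono; congr andb; apply: congr1; rewrite /Hedge.
by rewrite !(inj_eq (@ev_inj _ S)).
Qed.

Lemma y_out u : u \notin S -> y u = 0.
Proof. by rewrite inE negbK => /eqP. Qed.

Lemma L_reidx : L a b c eps P y' = L a b c eps Q y.
Proof.
rewrite /L (eq_bigl (fun t => pr a b c eps Q (ev3 t))); last by move=> t; rewrite pr_reidx.
rewrite (bigID (fun u => u \in [set ev3 t | t in [set: _]]) (pr a b c eps Q)) /=.
rewrite [X in _ = _ + X]big1 ?addr0; last first.
  move=> [[u1 u2] u3] /andP [_ hn] /=.
  have [h1|h1] := eqVneq (y u1) 0; first by rewrite h1 !mul0r.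
  have [h2|h2] := eqVneq (y u2) 0; first by rewrite h2 mulr0 mul0r.
  have [h3|h3] := eqVneq (y u3) 0; first by rewrite h3 mulr0.
  have s1 : u1 \in S by rewrite inE.
  have s2 : u2 \in S by rewrite inE.
  have s3 : u3 \in S by rewrite inE.
  exfalso; move/negP: hn; apply; apply/imsetP.
  exists (enum_rank_in s1 u1, enum_rank_in s1 u2, enum_rank_in s1 u3) => //.
  by rewrite /ev3 /ev /= !enum_rankK_in.
transitivity (\sum_(u in [set ev3 t | t in [set: _]] | pr a b c eps Q u) y u.1.1 * y u.1.2 * y u.2); last first.
  by apply: eq_bigl => u; rewrite andbC.
rewrite big_imset_cond /=; last by move=> ? ? _ _; apply: ev3_inj.
by apply: eq_bigl => t; rewrite finset.in_setT.
Qed.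

Lemma y_le1 i : y i <= 1.
Proof.
case: hy => h0 h1; rewrite -h1 (bigD1 i) //= lerDl; exact: sumr_ge0.
Qed.

Lemma simplex_reidx : (forall i, 0 <= y' i <= 1) /\ \sum_(i < #|S|) y' i = 1.
Proof.
split; first by move=> i; rewrite /y' y_le1 andbT; case: hy.
case: hy => _ <-; rewrite /y' /ev -(big_enum_val (A := mem S) y) /=.
rewrite big_mkcond /=; apply: eq_bigr => i _.
by case: ifP => // /negbT /y_out ->.
Qed.

Lemma lag_ge : L a b c eps P y' <= lagrangian a b c eps P.
Proof.
rewrite /lagrangian; apply: ub_le_sup; last by exists y'; first exact: simplex_reidx.
exists (\sum_(t : 'I_#|S| * 'I_#|S| * 'I_#|S| |
              ((t.1.1 < t.1.2)%N && (t.1.2 < t.2)%N) &&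
              `[< Hedge a b c eps P t.1.1 t.1.2 t.2 >]) (1 : R)).
move=> e [x [hx _] <-]; apply: ler_sum => t _.
have h1 := hx t.1.1; have h2 := hx t.1.2; have h3 := hx t.2.
case/andP: h1 => h1 h1'; case/andP: h2 => h2 h2'; case/andP: h3 => h3 h3'.
apply: mulr_ile1 => //; [exact: mulr_ge0 | exact: mulr_ile1].
Qed.

Lemma P_inj : injective Q -> injective P.
Proof. by move=> hQ i j /hQ /ev_inj. Qed.

Lemma P_shadow : closedS a b c eps Q S -> shadow_complete a b c eps P.
Proof.
move=> hc i j ij.
have [k [ks hk]] := hc (ev i) (ev j) (ev_in i) (ev_in j) ltac:(by rewrite (inj_eq (@ev_inj _ S))).
exists (enum_rank_in ks k).
have ek : ev (enum_rank_in ks k) = k by rewrite /ev enum_rankK_in.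
case: hk => h1 h2 h3 h4; split.
- by rewrite -(inj_eq (@ev_inj _ S)).
- by rewrite -(inj_eq (@ev_inj _ S)) ek.
- by rewrite -(inj_eq (@ev_inj _ S)) ek.
- by rewrite /P ek.
Qed.

End Lag2.

Section Core.
Variable R : realType.

Lemma sqdiff_le (w w' : R) : 0 <= w * w' -> (w - w') ^+ 2 <= `|w ^+ 2 - w' ^+ 2|.
Proof.
move=> h.
have [le|le] := lerP (w' ^+ 2) (w ^+ 2).
  nra.
nra.
Qed.

Lemma core_alg (u1 u2 v1 v2 z1 z2 eta K mu' : R) :
  0 <= eta -> 0 <= K -> 0 <= mu' ->
  `|(v1 ^+ 2 + v2 ^+ 2) - (z1 ^+ 2 + z2 ^+ 2)| <= eta ->
  `|((v1 - u1) ^+ 2 + (v2 - u2) ^+ 2) - ((z1 - u1) ^+ 2 + (z2 - u2) ^+ 2)| <= eta ->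
  u1 ^+ 2 + u2 ^+ 2 <= K ^+ 2 ->
  v1 ^+ 2 + v2 ^+ 2 <= K ^+ 2 ->
  z1 ^+ 2 + z2 ^+ 2 <= K ^+ 2 ->
  0 <= (u1 * v2 - u2 * v1) * (u1 * z2 - u2 * z1) ->
  mu' ^+ 2 <= u1 ^+ 2 + u2 ^+ 2 ->
  mu' ^+ 2 <= (v1 - z1) ^+ 2 + (v2 - z2) ^+ 2 ->
  mu' ^+ 4 <= eta ^+ 2 + 3 * K ^+ 2 * eta.
Proof.
move=> he hK hm h1 h2 hD hD1 hD1' hw hmD hmx.
set D := u1 ^+ 2 + u2 ^+ 2 in hD hmD *.
set t := u1 * v1 + u2 * v2; set t' := u1 * z1 + u2 * z2.
set w := u1 * v2 - u2 * v1 in hw; set w' := u1 * z2 - u2 * z1 in hw.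
have ht : `|t - t'| <= eta.
  have -> : t - t' = ((v1 ^+ 2 + v2 ^+ 2) - (z1 ^+ 2 + z2 ^+ 2)
      - (((v1 - u1) ^+ 2 + (v2 - u2) ^+ 2) - ((z1 - u1) ^+ 2 + (z2 - u2) ^+ 2))) / 2.
    by rewrite /t /t'; field.
  rewrite normrM (ger0_norm (x := 2^-1)) ?invr_ge0 // ler_pdivrMr //.
  apply: le_trans (ler_normB _ _) _; lra.
have iw : D * (v1 ^+ 2 + v2 ^+ 2) = t ^+ 2 + w ^+ 2 by rewrite /D /t /w; ring.
have iw' : D * (z1 ^+ 2 + z2 ^+ 2) = t' ^+ 2 + w' ^+ 2 by rewrite /D /t' /w'; ring.
have ix : D * ((v1 - z1) ^+ 2 + (v2 - z2) ^+ 2) = (t - t') ^+ 2 + (w - w') ^+ 2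
  by rewrite /D /t /t' /w /w'; ring.
have D0 : 0 <= D by rewrite /D; apply: addr_ge0; apply: sqr_ge0.
have K2 : 0 <= K ^+ 2 by apply: sqr_ge0.
have tK : `|t| <= K ^+ 2.
  have : t ^+ 2 <= (K ^+ 2) ^+ 2.
    have : t ^+ 2 <= D * (v1 ^+ 2 + v2 ^+ 2) by rewrite iw lerDl sqr_ge0.
    move=> h; apply: le_trans h _; rewrite expr2; apply: ler_pM => //.
    by apply: addr_ge0; apply: sqr_ge0.
  by rewrite -real_normK ?num_real // ler_pXn2r ?nnegrE.
have tK' : `|t'| <= K ^+ 2.
  have : t' ^+ 2 <= (K ^+ 2) ^+ 2.
    have : t' ^+ 2 <= D * (z1 ^+ 2 + z2 ^+ 2) by rewrite iw' lerDl sqr_ge0.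
    move=> h; apply: le_trans h _; rewrite expr2; apply: ler_pM => //.
    by apply: addr_ge0; apply: sqr_ge0.
  by rewrite -real_normK ?num_real // ler_pXn2r ?nnegrE.
have hww : `|w ^+ 2 - w' ^+ 2| <= 3 * K ^+ 2 * eta.
  have -> : w ^+ 2 - w' ^+ 2 = D * ((v1 ^+ 2 + v2 ^+ 2) - (z1 ^+ 2 + z2 ^+ 2))
       - (t - t') * (t + t').
    have -> : w ^+ 2 = D * (v1 ^+ 2 + v2 ^+ 2) - t ^+ 2 by rewrite iw; ring.
    have -> : w' ^+ 2 = D * (z1 ^+ 2 + z2 ^+ 2) - t' ^+ 2 by rewrite iw'; ring.
    ring.
  apply: le_trans (ler_normB _ _) _; rewrite !normrM ger0_norm //.
  have a1 : D * `|(v1 ^+ 2 + v2 ^+ 2) - (z1 ^+ 2 + z2 ^+ 2)| <= K ^+ 2 * eta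
    by apply: ler_pM.
  have a2 : `|t - t'| * `|t + t'| <= eta * (2 * K ^+ 2).
    apply: ler_pM => //; apply: le_trans (ler_normD _ _) _; lra.
  lra.
have hw2 := sqdiff_le hw.
have : mu' ^+ 4 <= D * ((v1 - z1) ^+ 2 + (v2 - z2) ^+ 2).
  have -> : mu' ^+ 4 = mu' ^+ 2 * mu' ^+ 2 by ring.
  by apply: ler_pM => //; apply: sqr_ge0.
rewrite ix => h.
have : (t - t') ^+ 2 <= eta ^+ 2.
  by rewrite -real_normK ?num_real // ler_pXn2r ?nnegrE.
lra.
Qed.

Lemma small (mu M eps : R) : 0 < mu -> mu <= M -> 0 < eps ->
  eps < mu ^+ 3 / (4000 * M ^+ 3) ->
  (4 * (2 * (eps * mu)) * (M + 2 * (eps * mu))) ^+ 2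
  + 3 * (M + 2 * (eps * mu)) ^+ 2 * (4 * (2 * (eps * mu)) * (M + 2 * (eps * mu)))
  < (mu - 2 * (eps * mu)) ^+ 4.
Proof.
move=> m0 mM e0 he.
have M0 : 0 < M by apply: lt_le_trans mM.
have M30 : 0 < M ^+ 3 by apply: exprn_gt0.
have h1 : eps * (4000 * M ^+ 3) < mu ^+ 3 by rewrite -ltr_pdivlMr // mulr_gt0.
have m3 : mu ^+ 3 <= M ^+ 3 by rewrite lerXn2r ?nnegrE // ltW.
have h2 : eps * 4000 < 1.
  have : eps * 4000 * M ^+ 3 < 1 * M ^+ 3 by rewrite mul1r -mulrA; apply: lt_le_trans h1 m3.
  by rewrite ltr_pM2r.
set t := 2 * (eps * mu).
have ht0 : 0 <= t by rewrite /t; apply: mulr_ge0 => //; apply: mulr_ge0; apply: ltW.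
have ht : t * 2000 <= mu.
  rewrite /t; have -> : 2 * (eps * mu) * 2000 = (eps * 4000) * mu by ring.
  nra.
set K := M + t.
have hK : K <= 2 * M by rewrite /K; lra.
have K0 : 0 <= K by rewrite /K; lra.
set eta := 4 * t * K.
have he0 : 0 <= eta by rewrite /eta; apply: mulr_ge0 => //; apply: mulr_ge0.
have hE : eta <= 16 * (eps * mu) * M.
  rewrite /eta /t; have -> : 16 * (eps * mu) * M = (8 * (eps * mu)) * (2 * M) by ring.
  have -> : 4 * (2 * (eps * mu)) * K = (8 * (eps * mu)) * K by ring.
  have em0 : 0 <= eps * mu by apply: mulr_ge0; apply: ltW.
  by apply: ler_wpM2l hK; apply: mulr_ge0.
have hE2 : eta * (4000 * M ^+ 2) < 16 * mu ^+ 4.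
  have hE' : eta * (4000 * M ^+ 2) <= 16 * (eps * mu) * M * (4000 * M ^+ 2).
    by apply: ler_wpM2r hE; rewrite mulr_ge0 // sqr_ge0.
  apply: le_lt_trans hE' _.
  have -> : 16 * (eps * mu) * M * (4000 * M ^+ 2) = 16 * mu * (eps * (4000 * M ^+ 3)) by ring.
  have -> : 16 * mu ^+ 4 = 16 * mu * mu ^+ 3 by ring.
  by rewrite ltr_pM2l // mulr_gt0.
have m4 : mu ^+ 4 <= M ^+ 4 by rewrite lerXn2r ?nnegrE // ltW.
have M2 : 0 < M ^+ 2 by apply: exprn_gt0.
have hEM : eta <= M ^+ 2.
  have : eta * (4000 * M ^+ 2) <= M ^+ 2 * (4000 * M ^+ 2).
    apply: ltW; apply: lt_le_trans hE2 _.
    have -> : M ^+ 2 * (4000 * M ^+ 2) = 4000 * M ^+ 4 by ring.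
    have : 0 <= M ^+ 4 by apply: exprn_ge0; apply: ltW.
    lra.
  by rewrite ler_pM2r // mulr_gt0.
have hK2 : K ^+ 2 <= 4 * M ^+ 2.
  have -> : 4 * M ^+ 2 = (2 * M) ^+ 2 by ring.
  by rewrite lerXn2r ?nnegrE //; lra.
have hL : eta ^+ 2 + 3 * K ^+ 2 * eta <= 13 * M ^+ 2 * eta.
  have a1 : eta ^+ 2 <= M ^+ 2 * eta by rewrite expr2; exact: ler_wpM2r he0 _ _ hEM.
  have a2 : 3 * K ^+ 2 * eta <= 12 * M ^+ 2 * eta.
    apply: (ler_wpM2r he0); lra.
  have -> : 13 * M ^+ 2 * eta = M ^+ 2 * eta + 12 * M ^+ 2 * eta by ring.
  exact: lerD.
have hm : mu / 2 <= mu - t by lra.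
have hm4 : (mu / 2) ^+ 4 <= (mu - t) ^+ 4 by rewrite lerXn2r ?nnegrE //; lra.
apply: le_lt_trans hL _; apply: lt_le_trans hm4.
have -> : (mu / 2) ^+ 4 = mu ^+ 4 / 16 by rewrite expr_div_n; congr (_ / _); rewrite -natrX.
have -> : 13 * M ^+ 2 * eta = 13 / 4000 * (eta * (4000 * M ^+ 2)) by field.
have : 0 <= mu ^+ 4 by apply: exprn_ge0; apply: ltW.
lra.
Qed.

Definition wf (p q x : pt R) := (q.1 - p.1) * (x.2 - p.2) - (q.2 - p.2) * (x.1 - p.1).

Lemma sq_le (d K : R) : 0 <= d -> d <= K -> d ^+ 2 <= K ^+ 2.
Proof. move=> d0 dK; rewrite lerXn2r ?nnegrE //; exact: le_trans dK. Qed.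

Lemma core_pts (p q x x' : pt R) (eta K mu' : R) :
  0 <= eta -> 0 <= K -> 0 <= mu' ->
  `|dist x p ^+ 2 - dist x' p ^+ 2| <= eta ->
  `|dist x q ^+ 2 - dist x' q ^+ 2| <= eta ->
  dist q p <= K -> dist x p <= K -> dist x' p <= K ->
  0 <= wf p q x * wf p q x' -> mu' <= dist q p -> mu' <= dist x x' ->
  mu' ^+ 4 <= eta ^+ 2 + 3 * K ^+ 2 * eta.
Proof.
move=> he hK hm h1 h2 hqp hxp hx'p hw m1 m2.
apply: (@core_alg (q.1 - p.1) (q.2 - p.2) (x.1 - p.1) (x.2 - p.2) (x'.1 - p.1) (x'.2 - p.2)) => //.
- by rewrite -!dist2.
- have -> : x.1 - p.1 - (q.1 - p.1) = x.1 - q.1 by ring.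
  have -> : x.2 - p.2 - (q.2 - p.2) = x.2 - q.2 by ring.
  have -> : x'.1 - p.1 - (q.1 - p.1) = x'.1 - q.1 by ring.
  have -> : x'.2 - p.2 - (q.2 - p.2) = x'.2 - q.2 by ring.
  by rewrite -!dist2.
- by rewrite -dist2; apply: sq_le => //; apply: dist_ge0.
- by rewrite -dist2; apply: sq_le => //; apply: dist_ge0.
- by rewrite -dist2; apply: sq_le => //; apply: dist_ge0.
- by rewrite -dist2; apply: sq_le.
- have -> : x.1 - p.1 - (x'.1 - p.1) = x.1 - x'.1 by ring.
  have -> : x.2 - p.2 - (x'.2 - p.2) = x.2 - x'.2 by ring.
  by rewrite -dist2; apply: sq_le.
Qed.

Lemma sqclose (d d' s t K : R) : 0 <= d -> 0 <= d' -> d <= K -> d' <= K ->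
  `|d - s| <= t -> `|d' - s| <= t -> `|d ^+ 2 - d' ^+ 2| <= 4 * t * K.
Proof.
move=> d0 d'0 dK d'K hA hB.
rewrite ler_norml in hA; rewrite ler_norml in hB.
case/andP: hA => h1 h2; case/andP: hB => h3 h4.
have -> : d ^+ 2 - d' ^+ 2 = (d - d') * (d + d') by ring.
rewrite normrM (ger0_norm (x := d + d')) ?addr_ge0 //.
have -> : 4 * t * K = (2 * t) * (2 * K) by ring.
apply: ler_pM; [exact: normr_ge0 | exact: addr_ge0 | | lra].
rewrite ler_norml; apply/andP; split; lra.
Qed.

End Core.

Section Count.
Variable R : realType.
Variables (a b c eps : R) (n : nat) (Q : 'I_n -> pt R).
Hypothesis tri : is_triangle a b c.
Hypothesis e0 : 0 < eps.
Let M := Num.max a (Num.max b c).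
Hypothesis esmall : eps < mu a b c ^+ 3 / (4000 * M ^+ 3).
Let m := mu a b c.
Let t := 2 * (eps * m).

Lemma side_bounds s : s \in [:: a; b; c] -> m <= s /\ s <= M.
Proof.
rewrite /m /mu /M !inE => /orP [/eqP ->|/orP [/eqP ->|/eqP ->]]; split;
  rewrite ?ge_min ?le_max ?ge_min ?le_max ?lexx ?orbT //.
Qed.

Lemma m_gt0 : 0 < m.
Proof. by case: tri => ha hb hc _; rewrite /m /mu !lt_min ha hb hc. Qed.

Lemma m_le_M : m <= M.
Proof. by have [h1 h2] := @side_bounds a ltac:(by rewrite inE eqxx); apply: le_trans h1 h2. Qed.

Lemma t_le : t <= m.
Proof.
have m0 := m_gt0; have mM := m_le_M.
have M0 : 0 < M by apply: lt_le_trans mM.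
have M30 : 0 < M ^+ 3 by apply: exprn_gt0.
have h1 : eps * (4000 * M ^+ 3) < m ^+ 3 by rewrite -ltr_pdivlMr // mulr_gt0.
have m3 : m ^+ 3 <= M ^+ 3 by rewrite lerXn2r ?nnegrE // ltW.
have h2 : eps * 4000 < 1.
  have : eps * 4000 * M ^+ 3 < 1 * M ^+ 3 by rewrite mul1r -mulrA; apply: lt_le_trans h1 m3.
  by rewrite ltr_pM2r.
rewrite /t; nra.
Qed.

Definition cls (d : R) : 'I_3 :=
  odflt ord0 [pick k : 'I_3 | `|d - nth 0 [:: a; b; c] k| <= t].

Lemma cls_ok d : (exists2 s, s \in [:: a; b; c] & `|d - s| <= t) ->
  `|d - nth 0 [:: a; b; c] (cls d)| <= t.
Proof.
case=> s hs hd; rewrite /cls; case: pickP => [k hk //|hn].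
move: hs; rewrite !inE => /orP [/eqP e|/orP [/eqP e|/eqP e]]; subst s.
- by have := hn (@Ordinal 3 0 isT); rewrite /= hd.
- by have := hn (@Ordinal 3 1 isT); rewrite /= hd.
- by have := hn (@Ordinal 3 2 isT); rewrite /= hd.
Qed.

Variable S : {set 'I_n}.
Hypothesis hS : closedS a b c eps Q S.

Lemma pairS i j : i \in S -> j \in S -> i != j ->
  exists2 s, s \in [:: a; b; c] & `|dist (Q i) (Q j) - s| <= t.
Proof.
move=> hi hj ij; have [k [_ hk]] := hS hi hj ij.
exact: (Hedge_dist hk).
Qed.

Lemma pair_bounds i j : i \in S -> j \in S -> i != j ->
  m - t <= dist (Q i) (Q j) /\ dist (Q i) (Q j) <= M + t.
Proof.
move=> hi hj ij; have [s hs hd] := pairS hi hj ij.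
have [h1 h2] := side_bounds hs; move: hd; rewrite ler_norml => /andP [h3 h4].
split; lra.
Qed.

Lemma card_le20 : (#|S| <= 20)%N.
Proof.
case: (leqP #|S| 2) => [h|h]; first by apply: leq_trans h _.
have /finset.set0Pn [p hp] : S != finset.set0 by rewrite -card_gt0; apply: leq_trans h.
have cS := cardsD1 p S; rewrite hp in cS.
have /finset.set0Pn [q hq] : S :\ p != finset.set0 by rewrite -card_gt0; rewrite cS /= add1n ltnS in h; apply: leq_trans h.
move: (hq); rewrite !inE => /andP [qp hqS].
have cS' := cardsD1 q (S :\ p); rewrite hq in cS'.
set S' := S :\ p :\ q in cS'.
have hm0 := m_gt0; have htm := t_le.
have t0 : 0 <= t by rewrite /t; apply: mulr_ge0 => //; apply: mulr_ge0 => //; apply: ltW.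
pose f x := (cls (dist (Q x) (Q p)), cls (dist (Q x) (Q q)), (0 <= wf (Q p) (Q q) (Q x))).
have inj : {in S' &, injective f}.
  move=> x x'; rewrite !inE => /and3P [xq xp xS] /and3P [x'q x'p x'S] [e1 e2 e3].
  have [//|xx'] := eqVneq x x'; exfalso.
  have [bxp1 bxp2] := pair_bounds xS hp xp.
  have [bx'p1 bx'p2] := pair_bounds x'S hp x'p.
  have [bxq1 bxq2] := pair_bounds xS hqS xq.
  have [bx'q1 bx'q2] := pair_bounds x'S hqS x'q.
  have [bqp1 bqp2] := pair_bounds hqS hp qp.
  have [bxx1 bxx2] := pair_bounds xS x'S xx'.
  have c1 := cls_ok (pairS xS hp xp); have c1' := cls_ok (pairS x'S hp x'p).
  have c2 := cls_ok (pairS xS hqS xq); have c2' := cls_ok (pairS x'S hqS x'q).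
  rewrite -e1 in c1'; rewrite -e2 in c2'.
  have h1 := sqclose (dist_ge0 _ _) (dist_ge0 _ _) bxp2 bx'p2 c1 c1'.
  have h2 := sqclose (dist_ge0 _ _) (dist_ge0 _ _) bxq2 bx'q2 c2 c2'.
  have hw : 0 <= wf (Q p) (Q q) (Q x) * wf (Q p) (Q q) (Q x').
    move: e3; case: (lerP 0 (wf (Q p) (Q q) (Q x))) => w1;
      case: (lerP 0 (wf (Q p) (Q q) (Q x'))) => w2 // _; first exact: mulr_ge0.
    by apply: ltW; rewrite nmulr_rgt0.
  have := core_pts (eta := 4 * t * (M + t)) (K := M + t) (mu' := m - t)
    ltac:(by apply: mulr_ge0; [apply: mulr_ge0 | lra]) ltac:(lra) ltac:(lra)
    h1 h2 bqp2 bxp2 bx'p2 hw bqp1 bxx1.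
  have := small m_gt0 m_le_M e0 esmall.
  move=> H1 H2; have := lt_le_trans H1 H2; by rewrite ltxx.
have := card_in_imset inj.
have : (#|[set f x | x in S']| <= #|{: 'I_3 * 'I_3 * bool}|)%N by apply: max_card.
rewrite !card_prod !card_ord card_bool => h1 h2.
rewrite cS cS' -h2; apply: leq_trans (_ : (2 + 18 <= 20)%N) => //.
Qed.

End Count.

Section Main.
Variable R : realType.
Local Open Scope classical_set_scope.
Variables (a b c : R) (n : nat).

Definition Sh (e : R) : set R := [set (count_cong a b c e P)%:R | P in [set P : 'I_n -> pt R | injective P]].

Definition Q0 : 'I_n -> pt R := fun i => ((i : nat)%:R, 0).

Lemma Q0_inj : injective Q0.
Proof. move=> i j [] /eqP; rewrite eqr_nat => /eqP; exact: val_inj. Qed.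

Lemma count_le e (P : 'I_n -> pt R) : (count_cong a b c e P <= #|{: 'I_n * 'I_n * 'I_n}|)%N.
Proof. exact: max_card. Qed.

Lemma hsup e : has_sup (Sh e).
Proof.
split; first by exists (count_cong a b c e Q0)%:R; exists Q0 => //; exact: Q0_inj.
exists (#|{: 'I_n * 'I_n * 'I_n}|)%:R => x [P _ <-].
by rewrite ler_nat count_le.
Qed.

Lemma h_eps_ge0 e : 0 <= h_eps n a b c e.
Proof.
rewrite /h_eps; apply: le_trans (_ : (count_cong a b c e Q0)%:R <= _) => //.
apply: ub_le_sup; first exact: (hsup e).2.
by exists Q0 => //; exact: Q0_inj.
Qed.

Lemma hT_le e : 0 < e -> h_T n a b c <= h_eps n a b c e.
Proof.
move=> e0; rewrite /h_T.
have hl : has_lbound [set h_eps n a b c e0 | e0 in [set e1 : R | 0 < e1]].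
  by exists 0 => x [e' _ <-]; exact: h_eps_ge0.
by apply: (ge_inf hl); exists e.
Qed.

Lemma h_eps_max e : exists2 Q : 'I_n -> pt R, injective Q &
  h_eps n a b c e <= (count_cong a b c e Q)%:R.
Proof.
have hs := hsup e.
have [x [Q hQ <-] hx] := sup_adherent ltr01 hs.
exists Q => //; rewrite /h_eps -/(Sh e).
rewrite leNgt; apply/negP => hlt.
have hp : 0 < sup (Sh e) - (count_cong a b c e Q)%:R by rewrite subr_gt0.
have [x' [Q' hQ' <-] hx'] := sup_adherent hp hs.
rewrite opprB addrC subrK in hx'.
have : ((count_cong a b c e Q')%:R : R) <= sup (Sh e).
  by apply: ub_le_sup; [exact: hs.2 | exists Q'].
move=> hub; rewrite ltr_nat in hx'.
have : ((count_cong a b c e Q).+1%:R : R) <= (count_cong a b c e Q')%:R by rewrite ler_nat.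
rewrite -addn1 natrD; lra.
Qed.


Lemma count_L (e : R) (Q : 'I_n -> pt R) : (0 < n)%N ->
  ((count_cong a b c e Q)%:R : R) = n%:R ^+ 3 * L a b c e Q (fun _ => n%:R^-1).
Proof.
move=> n0.
have -> : L a b c e Q (fun _ => n%:R^-1) =
    \sum_(t in [set t | pr a b c e Q t]%SET) n%:R^-1 ^+ 3.
  rewrite /L; apply: eq_big => [t|t _]; first by rewrite inE.
  by rewrite -mulrA -expr2 -exprS.
rewrite sumr_const mulrnAr -exprMn mulfV ?pnatr_eq0 -?lt0n // expr1n.
congr (_%:R); apply: eq_card => t; rewrite unfold_in /in_set /= asboolb finset.inE. by []. Qed.

Lemma unif_simplex : (0 < n)%N -> simplex (fun _ : 'I_n => (n%:R : R)^-1).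
Proof.
move=> n0; split; first by move=> i; rewrite invr_ge0 ler0n.
by rewrite sumr_const card_ord -(mulr_natr (n%:R^-1) n) mulVf // pnatr_eq0 -lt0n.
Qed.

End Main.

Unset Implicit Arguments.

Theorem lemma3p1 (R : realType) (a b c : R) (n : nat) :
  is_triangle a b c -> (0 < n)%N ->
  exists eps0 : R, 0 < eps0 /\
    forall eps : R, 0 < eps -> eps < eps0 ->
      exists (m : nat) (P : 'I_m -> pt R),
        [/\ (m <= 20)%N, injective P,
            shadow_complete a b c eps P &
            h_T n a b c <= (n%:R) ^+ 3 * lagrangian a b c eps P].
Proof.
move=> tri n0.
exists (mu a b c ^+ 3 / (4000 * Num.max a (Num.max b c) ^+ 3)); split.
  have m0 : 0 < mu a b c by case: tri => ha hb hc _; rewrite /mu !lt_min ha hb hc.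
  have M0 : 0 < Num.max a (Num.max b c) by case: tri => ha hb hc _; rewrite !lt_max ha.
  by apply: divr_gt0; [exact: exprn_gt0 | apply: mulr_gt0 => //; exact: exprn_gt0].
move=> eps e0 esmall.
have [Q hQ hmax] := h_eps_max a b c n eps.
have hu := unif_simplex R n0.
have [y [hy hLy hcl]] := reduce a b c eps Q (N := n) (x := fun _ => (n%:R : R)^-1)
   ltac:(by apply: leq_trans (max_card _) _; rewrite card_ord) hu.
exists #|supp y|, (fun i => Q (ev i)); split.
- exact: (card_le20 tri e0 esmall hcl).
- exact: P_inj.
- exact: P_shadow.
apply: le_trans (hT_le a b c n e0) _.
apply: le_trans hmax _; rewrite (count_L _ _ _ _ _ n0).
have n3 : 0 <= (n%:R : R) ^+ 3 by apply: exprn_ge0; apply: ler0n.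
apply: (ler_wpM2l n3).
apply: le_trans hLy _.
rewrite -(L_reidx a b c eps Q y).
exact: lag_ge.
Qed.
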